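(* Let $X\subseteq\mathbb{R}^{\mathbb{Z}_<}$, $f:X\to\mathbb{R}^{\mathbb{Z}_<}$ and $x_0\in X$. Then $f$ is $\iota$-continuous at $x_0$ if and only if for every sequence $(x_n)$ in $X$ with $\mathrm{HC}(x_n,x_0)$, the sequence $(f(x_n))$ satisfies $\mathrm{HC}(f(x_n),f(x_0))$.
   Context: $\mathbb{R}^{\mathbb{Z}_<}$ is the set of formal series $\sum_{i\ge -k}a_i\epsilon^i$ ($k\in\mathbb{N}\cup\{0\}$, $a_i\in\mathbb{R}$), with coefficientwise addition, Cauchy-product multiplication and lexicographic order; $|\cdot|$ is the associated absolute value. $f$ is $\iota$-continuous at $x_0$ means: for every positive $\iota_1\in\mathbb{R}^{\mathbb{Z}_<}$ there is a positive $\iota_2\in\mathbb{R}^{\mathbb{Z}_<}$ such that $x\in X$ and $|x-x_0|<\iota_2$ imply $|f(x)-f(x_0)|<\iota_1$. $\mathrm{HC}(s_n,s)$ (hyperconvergence) means: for every $r\in\mathbb{R}^{\mathbb{Z}_<}$ with $r>0$ there is $N$ such that $|s_n-s|<r$ for all $n>N$. *)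

(* Defs.v *)
(* the field R^{Z_<} of formal Laurent series with finitely many
   negative powers, sum_{i >= -k} a_i eps^i, a_i real. *)
From Stdlib Require Import Reals ZArith Lra Lia ClassicalDescription.
Open Scope R_scope.

Record LS : Type := mkLS {
  coef : Z -> R ;
  coef_lb : exists k : Z, forall i : Z, (i < k)%Z -> coef i = 0
}.

Definition LS_add (x y : LS) : LS.
Proof.
  refine (mkLS (fun i => coef x i + coef y i) _).
  destruct (coef_lb x) as [kx Hx]; destruct (coef_lb y) as [ky Hy].
  exists (Z.min kx ky); intros i Hi.
  rewrite Hx, Hy by lia; lra.
Defined.

Definition LS_opp (x : LS) : LS.
Proof.
  refine (mkLS (fun i => - coef x i) _).
  destruct (coef_lb x) as [kx Hx].
  exists kx; intros i Hi. rewrite Hx by lia; lra.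
Defined.

Definition LS_sub (x y : LS) : LS := LS_add x (LS_opp y).

Definition LS_pos (x : LS) : Prop :=
  exists k : Z, 0 < coef x k /\ forall i : Z, (i < k)%Z -> coef x i = 0.

Definition LS_lt (x y : LS) : Prop := LS_pos (LS_sub y x).

Definition LS_abs (x : LS) : LS :=
  if excluded_middle_informative (LS_pos (LS_opp x)) then LS_opp x else x.

(* iota-continuity of f : X -> R^{Z_<} at x0 (f is given as a total
   function; only its values on X matter). *)
Definition iota_continuous (X : LS -> Prop) (f : LS -> LS) (x0 : LS) : Prop :=
  forall iota1 : LS, LS_pos iota1 ->
    exists iota2 : LS, LS_pos iota2 /\
      forall x : LS, X x -> LS_lt (LS_abs (LS_sub x x0)) iota2 ->
        LS_lt (LS_abs (LS_sub (f x) (f x0))) iota1.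

Definition HC (s : nat -> LS) (l : LS) : Prop :=
  forall r : LS, LS_pos r ->
    exists N : nat, forall n : nat, (n > N)%nat ->
      LS_lt (LS_abs (LS_sub (s n) l)) r.

(* Main.v *)
Require Import Defs.
From Stdlib Require Import Reals ZArith Lra Lia Classical ClassicalEpsilon.
Open Scope R_scope.

Lemma pos_sum (x y z : LS) : LS_pos x -> LS_pos y ->
  (forall i, coef z i = coef x i + coef y i) -> LS_pos z.
Proof.
  intros [kx [Hx Hx']] [ky [Hy Hy']] Hz.
  destruct (Z.lt_total kx ky) as [H|[H|H]].
  - exists kx; split.
    + rewrite Hz, (Hy' kx) by lia; lra.
    + intros i Hi; rewrite Hz, Hx', Hy' by lia; lra.
  - subst; exists ky; split.
    + rewrite Hz; lra.
    + intros i Hi; rewrite Hz, Hx', Hy' by lia; lra.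
  - exists ky; split.
    + rewrite Hz, (Hx' ky) by lia; lra.
    + intros i Hi; rewrite Hz, Hx', Hy' by lia; lra.
Qed.

Lemma lt_trans (a b c : LS) : LS_lt a b -> LS_lt b c -> LS_lt a c.
Proof.
  unfold LS_lt; intros H1 H2.
  apply (pos_sum _ _ _ H2 H1).
  intros i; simpl; lra.
Qed.

Definition epsn (n : Z) : LS.
Proof.
  refine (mkLS (fun i => if Z.eq_dec i n then 1 else 0) _).
  exists n; intros i Hi; destruct (Z.eq_dec i n); [lia|reflexivity].
Defined.

Lemma epsn_pos n : LS_pos (epsn n).
Proof.
  exists n; simpl; split.
  - destruct (Z.eq_dec n n); [lra|congruence].
  - intros i Hi; destruct (Z.eq_dec i n); [lia|reflexivity].
Qed.

Lemma epsn_lt (r : LS) k n : 0 < coef r k -> (forall i, (i < k)%Z -> coef r i = 0) ->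
  (k < n)%Z -> LS_lt (epsn n) r.
Proof.
  intros Hk Hb Hn. exists k; simpl; split.
  - destruct (Z.eq_dec k n); [lia|lra].
  - intros i Hi; rewrite Hb by lia; destruct (Z.eq_dec i n); [lia|lra].
Qed.

Theorem mainTheorem16 (X : LS -> Prop) (f : LS -> LS) (x0 : LS) :
  X x0 ->
  (iota_continuous X f x0 <->
   forall s : nat -> LS, (forall n, X (s n)) -> HC s x0 ->
     HC (fun n => f (s n)) (f x0)).
Proof.
  intros HX0; split.
  - intros Hc s HXs Hs r Hr.
    destruct (Hc r Hr) as [i2 [Hi2 Hi2']].
    destruct (Hs i2 Hi2) as [N HN].
    exists N; intros n Hn; apply Hi2'; auto.
  - intros H iota1 Hpos. apply NNPP; intro Hn.
    assert (Hex : forall n : nat, exists x, X x /\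
      LS_lt (LS_abs (LS_sub x x0)) (epsn (Z.of_nat n)) /\
      ~ LS_lt (LS_abs (LS_sub (f x) (f x0))) iota1).
    { intros n. apply NNPP; intro Hne. apply Hn.
      exists (epsn (Z.of_nat n)); split; [apply epsn_pos|].
      intros x Hx Hl. apply NNPP; intro Hf. apply Hne. exists x; auto. }
    pose (s := fun n => proj1_sig (constructive_indefinite_description _ (Hex n))).
    assert (Hsp : forall n, X (s n) /\
      LS_lt (LS_abs (LS_sub (s n) x0)) (epsn (Z.of_nat n)) /\
      ~ LS_lt (LS_abs (LS_sub (f (s n)) (f x0))) iota1).
    { intros n; unfold s; destruct (constructive_indefinite_description _ (Hex n)); simpl; auto. }
    assert (HC s x0) as Hs.
    { intros r [k [Hk Hb]]. exists (Z.to_nat k). intros n Hnn.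
      apply lt_trans with (epsn (Z.of_nat n)); [apply Hsp|].
      apply (epsn_lt r k); auto; lia. }
    destruct (H s (fun n => proj1 (Hsp n)) Hs iota1 Hpos) as [N HN].
    apply (proj2 (proj2 (Hsp (S N)))). apply HN; lia.
Qed.
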